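(* Let $K\ge 1$ and $d_0,d_1,\ldots,d_K\in\mathbb{N}$ with $d_0=n$. Let $\{(x^i,y^i): i\in[m]\}\subset\mathbb{R}^n\times\{0,1\}$ be a set of labeled training samples such that $\|x^i\|_2\le r$ for all $i\in[m]$, and let $\ell:\{0,1\}\times\mathbb{R}^{d_K}\to\mathbb{R}$ be a loss function. For $\lambda\in\mathbb{R}$ let $\sigma_\lambda:\mathbb{R}\to\{0,1\}$ be given by $\sigma_\lambda(\alpha)=0$ if $\alpha<\lambda$ and $\sigma_\lambda(\alpha)=1$ otherwise, applied componentwise to vectors. Consider the training problem $$\min \sum_{i=1}^m \ell(y^i,z^i)\quad\text{s.t.}\quad z^i=\sigma_{\lambda_K}\big(W^K\sigma_{\lambda_{K-1}}(W^{K-1}\cdots\sigma_{\lambda_1}(W^1x^i)\cdots)\big)\ \forall i\in[m],\quad W^k\in\mathbb{R}^{d_k\times d_{k-1}},\ \lambda_k\in\mathbb{R}\ \forall k\in[K].$$ Then this problem is equivalent to the mixed-integer nonlinear program $$\min \sum_{i=1}^m \ell(y^i,u^{i,K})$$ subject to $$W^1x^i< M_1u^{i,1}+\mathbf{1}\lambda_1,\qquad W^1x^i\ge M_1(u^{i,1}-\mathbf{1})+\mathbf{1}\lambda_1\qquad \forall i\in[m],$$ $$W^ku^{i,k-1}< M_ku^{i,k}+\mathbf{1}\lambda_k,\qquad W^ku^{i,k-1}\ge M_k(u^{i,k}-\mathbf{1})+\mathbf{1}\lambda_k\qquad \forall k\in[K]\setminus\{1\},\ i\in[m],$$ $$W^k\in[-1,1]^{d_k\times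 d_{k-1}},\ \lambda_k\in[-1,1]\quad\forall k\in[K],\qquad u^{i,k}\in\{0,1\}^{d_k}\quad\forall i\in[m],\ k\in[K],$$ where $M_1:=nr+1$, $M_k:=d_{k-1}+1$ for $k\ge2$, $\mathbf{1}$ denotes the all-ones vector, and the inequalities between vectors are componentwise (the variable $u^{i,K}$ plays the role of the network output $z^i$).
   Context: $[p]:=\{1,\ldots,p\}$ for $p\in\mathbb{N}$. The function $z\mapsto \sigma_{\lambda_K}(W^K\sigma_{\lambda_{K-1}}(\cdots\sigma_{\lambda_1}(W^1x)\cdots))$ is a neural network with binary threshold activation functions, weight matrices $W^k$ and learnable thresholds $\lambda_k$ (one scalar threshold per layer). *)

(* Defs.v *)
From HB Require Import structures.
From mathcomp Require Import all_boot all_order all_algebra.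
From mathcomp Require Import reals.
Set Implicit Arguments. Unset Strict Implicit. Unset Printing Implicit Defensive.
Import Order.TTheory GRing.Theory Num.Theory.
Local Open Scope ring_scope.

Definition norm2 {R : realType} {n : nat} (x : 'cV[R]_n) : R :=
  Num.sqrt (\sum_(j < n) x j 0 ^+ 2).

Definition sigma {R : realType} {p : nat} (lam : R) (v : 'cV[R]_p) : 'cV[R]_p :=
  \col_j (if v j 0 < lam then 0 else 1).

(* Layers are indexed 0..K-1 (layer k here = layer k+1 of the paper):
   W k : 'M_(d k.+1, d k), lam k : R.  Values for k >= K are irrelevant. *)
Fixpoint net {R : realType} (d : nat -> nat)
  (W : forall k : nat, 'M[R]_(d k.+1, d k)) (lam : nat -> R)
  (x : 'cV[R]_(d 0)) (k : nat) : 'cV[R]_(d k) :=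
  match k with
  | 0 => x
  | k'.+1 => sigma (lam k') (W k' *m net W lam x k')
  end.

(* Input of (0-based) layer k in the MINLP: x^i for k = 0, u^{i,k} otherwise
   (u k is the paper's u^{i,k+1}). *)
Definition layer_in {R : realType} (d : nat -> nat)
  (x : 'cV[R]_(d 0)) (u : forall k : nat, 'cV[R]_(d k.+1)) (k : nat)
  : 'cV[R]_(d k) :=
  match k with
  | 0 => x
  | k'.+1 => u k'
  end.

(* Big-M constant of (0-based) layer k: M_1 = n r + 1, M_{k+1} = d_k + 1. *)
Definition bigM {R : realType} (d : nat -> nat) (r : R) (k : nat) : R :=
  if k == 0%N then (d 0)%:R * r + 1 else (d k)%:R + 1.

Definition minlp_feasible {R : realType} (K m : nat) (d : nat -> nat) (r : R)
  (x : 'I_m -> 'cV[R]_(d 0))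
  (W : forall k : nat, 'M[R]_(d k.+1, d k)) (lam : nat -> R)
  (u : 'I_m -> forall k : nat, 'cV[R]_(d k.+1)) : Prop :=
  (forall (i : 'I_m) (k : nat), (k < K)%N -> forall j : 'I_(d k.+1),
      (W k *m layer_in (x i) (u i) k) j 0 < bigM d r k * u i k j 0 + lam k /\
      (W k *m layer_in (x i) (u i) k) j 0 >= bigM d r k * (u i k j 0 - 1) + lam k)
  /\ (forall k : nat, (k < K)%N ->
        (forall a b, -1 <= W k a b <= 1) /\ -1 <= lam k <= 1)
  /\ (forall (i : 'I_m) (k : nat), (k < K)%N -> forall j : 'I_(d k.+1),
        u i k j 0 = 0 \/ u i k j 0 = 1).

(* Main.v *)
Require Import Defs.
From HB Require Import structures.
From mathcomp Require Import all_boot all_order all_algebra.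
From mathcomp Require Import reals lra.
Import Order.TTheory GRing.Theory Num.Theory.
Set Implicit Arguments. Unset Strict Implicit. Unset Printing Implicit Defensive.
Local Open Scope ring_scope.

Section Aux.
Variable R : realType.

Lemma sum_ge_term (I : finType) (F : I -> R) (i : I) :
  (forall j, 0 <= F j) -> F i <= \sum_j F j.
Proof.
move=> h; rewrite (bigD1 i) //= lerDl; apply: sumr_ge0 => j _; exact: h.
Qed.

Lemma entry_le_sum p q (A : 'M[R]_(p, q)) a b :
  `|A a b| <= \sum_a' \sum_b' `|A a' b'|.
Proof.
have h1 := @sum_ge_term _ (fun b' => `|A a b'|) b (fun _ => normr_ge0 _).
apply: (le_trans h1).
by apply: (@sum_ge_term _ (fun a' => \sum_b' `|A a' b'|) a) => j; apply: sumr_ge0.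
Qed.

Lemma sigma_scale p q (c l : R) (A : 'M[R]_(p, q)) v : 0 < c ->
  sigma (l / c) ((c^-1 *: A) *m v) = sigma l (A *m v).
Proof.
move=> hc; apply/matrixP => j k; rewrite -scalemxAl !mxE.
rewrite [l / c]mulrC ltr_pM2l // invr_gt0.
by [].
Qed.

Lemma sigmaE p (l : R) (v : 'cV[R]_p) j : sigma l v j 0 = if v j 0 < l then 0 else 1.
Proof. by rewrite mxE. Qed.

Lemma mulmx_bound p q (A : 'M[R]_(p, q)) (v : 'cV[R]_q) (B : R) j :
  (forall a b, `|A a b| <= 1/2) -> (forall b, `|v b 0| <= B) ->
  `|(A *m v) j 0| <= q%:R * B / 2.
Proof.
move=> hA hv; rewrite mxE; apply: le_trans (ler_norm_sum _ _ _) _.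
apply: le_trans (_ : \sum_(b < q) (1/2 * B) <= _).
  apply: ler_sum => b _; rewrite normrM; apply: ler_pM => //.
by rewrite sumr_const card_ord -mulr_natl; lra.
Qed.

Lemma bigM_ok (D w l : R) : 0 <= D -> `|w| <= D/2 -> `|l| <= 1/2 ->
  w < (D+1) * (if w < l then 0 else 1) + l /\
  w >= (D+1) * ((if w < l then 0 else 1) - 1) + l.
Proof.
move=> hD /ler_normlP [h1 h2] /ler_normlP [h3 h4].
case: ifP => h; rewrite ?subrr ?sub0r ?mulr0 ?mulr1 ?mulrN1 ?add0r; split;
  try lra; by rewrite leNgt h.
Qed.

End Aux.

Theorem lemma1 (R : realType) (K : nat) (d : nat -> nat) (m : nat) (r : R)
  (x : 'I_m -> 'cV[R]_(d 0)) (y : 'I_m -> bool)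
  (ell : bool -> 'cV[R]_(d K) -> R) :
  (1 <= K)%N ->
  (forall i : 'I_m, norm2 (x i) <= r) ->
  forall v : R,
    (exists (W : forall k : nat, 'M[R]_(d k.+1, d k)) (lam : nat -> R),
        v = \sum_(i < m) ell (y i) (net W lam (x i) K))
    <->
    (exists (W : forall k : nat, 'M[R]_(d k.+1, d k)) (lam : nat -> R)
            (u : 'I_m -> forall k : nat, 'cV[R]_(d k.+1)),
        @minlp_feasible R K m d r x W lam u /\
        v = \sum_(i < m) ell (y i) (layer_in (x i) (u i) K)).
Proof.
move=> hK hx v; split.
- move=> [W [lam ->]].
  pose c k := 2 * (1 + \sum_a \sum_b `|W k a b| + `|lam k|).
  have cpos k : 0 < c k.
    rewrite /c; have := normr_ge0 (lam k).
    have : 0 <= \sum_a \sum_b `|W k a b| by apply: sumr_ge0 => a _; apply: sumr_ge0.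
    lra.
  pose W' k := (c k)^-1 *: W k.
  pose lam' k := lam k / c k.
  have netE i k : net W' lam' (x i) k = net W lam (x i) k.
    elim: k => [|k IH] //=; by rewrite IH sigma_scale.
  have Wb k a b : `|W' k a b| <= 1/2.
    rewrite /W' mxE normrM [`|(c k)^-1|]ger0_norm ?invr_ge0 ?(ltW (cpos k)) //.
    rewrite mulrC ler_pdivrMr // /c.
    have := entry_le_sum (W k) a b; have := normr_ge0 (lam k); lra.
  have lb k : `|lam' k| <= 1/2.
    rewrite /lam' normrM [`|(c k)^-1|]ger0_norm ?invr_ge0 ?(ltW (cpos k)) //.
    rewrite ler_pdivrMr // /c.
    have : 0 <= \sum_a \sum_b `|W k a b| by apply: sumr_ge0 => a _; apply: sumr_ge0.
    lra.
  exists W', lam', (fun i k => net W' lam' (x i) k.+1).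
  have layerE i k : layer_in (x i) (fun k => net W' lam' (x i) k.+1) k =
      net W' lam' (x i) k by case: k.
  split; last first.
    apply: eq_bigr => i _; case: K hK ell => // K' _ ell; by rewrite layerE netE.
  split; [|split].
  + move=> i k _ j; rewrite layerE /= sigmaE.
    have rge0 : 0 <= r by apply: le_trans (hx i); apply: sqrtr_ge0.
    case: k j => [|k] j.
    * have hxb b : `|x i b 0| <= r.
        apply: le_trans (hx i); rewrite /norm2 -sqrtr_sqr ler_wsqrtr //.
        by apply: (@sum_ge_term R _ (fun b => x i b 0 ^+ 2) b) => b'; apply: sqr_ge0.
      have := mulmx_bound j (Wb 0%N) hxb.
      rewrite /bigM eqxx => hb.
      apply: bigM_ok; [exact: mulr_ge0|exact: hb|exact: lb].
    * have hub b : `|net W' lam' (x i) k.+1 b 0| <= 1.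
        by rewrite /= mxE; case: ifP; rewrite ?normr0 ?normr1.
      have := mulmx_bound j (Wb k.+1) hub.
      rewrite /bigM /= mulr1 => hb.
      apply: bigM_ok; [exact: ler0n|exact: hb|exact: lb].
  + move=> k _; split; last first.
      by have := lb k; move/ler_normlP => [? ?]; apply/andP; split; lra.
    by move=> a b; have := Wb k a b; move/ler_normlP => [? ?]; apply/andP; split; lra.
  + move=> i k _ j; rewrite /= mxE; case: ifP; by [left|right].
- move=> [W [lam [u [[hc [_ hu]] ->]]]].
  exists W, lam; apply: eq_bigr => i _.
  have key k : (k < K)%N -> u i k = net W lam (x i) k.+1.
    elim: k => [|k IH] hk.
    + apply/matrixP => j z; rewrite (ord1 z) /= /sigma mxE.
      have [h1 h2] := hc i 0%N hk j.
      case: (hu i 0%N hk j) => e; rewrite e in h1 h2 *.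
      * by move: h1; rewrite mulr0 add0r => ->.
      * move: h2; rewrite subrr mulr0 add0r; by rewrite leNgt => /negbTE ->.
    + apply/matrixP => j z; rewrite (ord1 z) /= /sigma mxE.
      have [h1 h2] := hc i k.+1 hk j.
      have E : layer_in (x i) (u i) k.+1 = net W lam (x i) k.+1
        by rewrite /= IH // ltnW.
      rewrite E in h1 h2.
      case: (hu i k.+1 hk j) => e; rewrite e in h1 h2 *.
      * by move: h1; rewrite mulr0 add0r => ->.
      * move: h2; rewrite subrr mulr0 add0r; by rewrite leNgt => /negbTE ->.
  have L k : (k <= K)%N -> layer_in (x i) (u i) k = net W lam (x i) k.
    by case: k => [|k] // hk; rewrite /= key.
  by rewrite L.
Qed.
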